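(* Let $\mathbb{X}$ be a Banach space over $\mathbb{R}$ or $\mathbb{C}$ and let $f\in \mathbb{X}^*$. Let $\mathbb{Y}$ be a linear subspace of $\mathbb{X}^{*}$ with $f\notin \mathbb{Y}$, and let $g_0\in \mathbb{Y}$. Then $g_0$ is a best approximation to $f$ out of $\mathbb{Y}$ if and only if for every finite-dimensional subspace $\mathbb{Z}$ of $\mathbb{Y}$ containing $g_0$, $$\Big\|(f-g_0)|_{\bigcap_{g\in \mathbb{Z}}\mathcal{N}(g)}\Big\|=\|f-g_0\|.$$
   Context: $\mathcal{N}(g)=\{x\in\mathbb{X}: g(x)=0\}$. For a closed subspace $\mathcal{W}\subseteq\mathbb{X}$, $\|h|_{\mathcal{W}}\|=\sup\{|h(x)|:x\in\mathcal{W},\|x\|\le 1\}$. $g_0$ is a best approximation to $f$ out of $\mathbb{Y}$ if $\|f-g_0\|=\inf_{g\in\mathbb{Y}}\|f-g\|$. *)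

(* Defs.v *)
From HB Require Import structures.
From mathcomp Require Import all_boot all_order all_algebra.
From mathcomp Require Import all_classical all_reals all_analysis.
From mathcomp Require Import complex.
Set Implicit Arguments. Unset Strict Implicit. Unset Printing Implicit Defensive.
Import Order.TTheory GRing.Theory Num.Theory.
Import numFieldNormedType.Exports.
Local Open Scope classical_set_scope.
Local Open Scope ring_scope.

Variant field_kind := RealF | ComplexF.

Definition scal (R : realType) (s : field_kind) : numFieldType :=
  match s with RealF => (R : numFieldType) | ComplexF => (R[i] : numFieldType) end.

(* Real value of a (real-valued) norm stored in the scalar field. *)
Definition toR (R : realType) (s : field_kind) : scal R s -> R :=
  match s return scal R s -> R with
  | RealF => fun x => x
  | ComplexF => fun z => complex.Re z
  end.

Section Dual.
Context (R : realType) (s : field_kind) (V : normedModType (scal R s)).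
Local Notation K := (scal R s).

Definition dual (h : V -> K) : Prop :=
  (forall (a : K) (x y : V), h (a *: x + y) = a * h x + h y) /\ continuous h.

Definition dual_subspace (Y : set (V -> K)) : Prop :=
  Y `<=` dual /\ Y (fun _ => 0) /\
  (forall (a : K) g h, Y g -> Y h -> Y (fun x => a * g x + h x)).

Definition fin_dim_subspace (Z : set (V -> K)) : Prop :=
  exists (n : nat) (b : 'I_n -> V -> K),
    Z = [set (fun x => \sum_(i < n) c i * b i x) | c in [set: 'I_n -> K]].

Definition nullspace (g : V -> K) : set V := [set x | g x = 0].

Definition restr_norm (h : V -> K) (W : set V) : \bar R :=
  ereal_sup [set (toR `|h x|)%:E | x in [set x | W x /\ toR `|x| <= 1]].

Definition dual_norm (h : V -> K) : \bar R := restr_norm h setT.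

Definition best_approx (f g0 : V -> K) (Y : set (V -> K)) : Prop :=
  dual_norm (fun x => f x - g0 x) =
  ereal_inf [set dual_norm (fun x => f x - g x) | g in Y].
End Dual.

(* Main.v *)
Require Import Defs.
From HB Require Import structures.
From mathcomp Require Import all_boot all_order all_algebra.
From mathcomp Require Import all_classical all_reals all_analysis.
From mathcomp Require Import complex.
From mathcomp Require Import ring lra.
Import Order.TTheory GRing.Theory Num.Theory.
Import numFieldNormedType.Exports.
Local Open Scope classical_set_scope.
Local Open Scope ring_scope.
Set Implicit Arguments. Unset Strict Implicit. Unset Printing Implicit Defensive.
Section ToR.
Variables (R : realType) (s : field_kind).
Local Notation K := (scal R s).
Local Notation toR := (@toR R s).

Lemma toRD (a b : K) : toR (a + b) = toR a + toR b.
Proof. move: a b; case: s => a b //=; by case: a b => [? ?] [? ?]. Qed.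

Lemma toRN (a : K) : toR (- a) = - toR a.
Proof. move: a; case: s => a //=; by case: a => [? ?]. Qed.

Lemma toR0 : toR 0 = 0.
Proof. by case: s. Qed.

Lemma toR1 : toR 1 = 1.
Proof. by case: s. Qed.

Lemma toR_le (a b : K) : a <= b -> toR a <= toR b.
Proof. move: a b; case: s => //= a b; rewrite lecE => /andP[]. done. Qed.

Lemma toRM_ge0 (a b : K) : 0 <= a -> toR (a * b) = toR a * toR b.
Proof.
move: a b; case: s => //= a b /ger0_Im; case: a b => [a1 a2] [b1 b2] /= ->.
by rewrite mul0r subr0.
Qed.

Lemma toR_ge0_eq0 (a : K) : 0 <= a -> toR a = 0 -> a = 0.
Proof.
move: a; case: s => //= a ha; have := ger0_Im ha; case: a {ha} => a1 a2 /= -> ->. done.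
Qed.

Definition nK (z : K) := toR `|z|.

Lemma nK_ge0 z : 0 <= nK z.
Proof. by rewrite /nK -toR0; apply: toR_le. Qed.

Lemma nKM a b : nK (a * b) = nK a * nK b.
Proof. by rewrite /nK normrM toRM_ge0. Qed.

Lemma nKD a b : nK (a + b) <= nK a + nK b.
Proof. by rewrite /nK -toRD; apply: toR_le; apply: ler_normD. Qed.

Lemma nKN a : nK (- a) = nK a.
Proof. by rewrite /nK normrN. Qed.

Lemma toR_le_nK z : toR z <= nK z.
Proof.
rewrite /nK; move: z; case: s => /= z; first exact: ler_norm.
case: z => a b /=.
apply: (le_trans (ler_norm a)); rewrite -sqrtr_sqr.
by apply: ler_wsqrtr; rewrite lerDl sqr_ge0.
Qed.

Lemma nK_eq0 z : nK z = 0 -> z = 0.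
Proof. by move=> /toR_ge0_eq0 -/(_ (normr_ge0 _)) /normr0_eq0. Qed.

Lemma rotR (z : R) : exists w : R, `|w| = 1 /\ w * z = `|z|.
Proof.
exists (if 0 <= z then 1 else -1).
case: ifP => hz; first by rewrite normr1 mul1r ger0_norm.
by rewrite normrN1 mulN1r ltr0_norm // ltNge hz.
Qed.

Lemma rotC (z : R[i]) : exists w : R[i], complex.Re `|w| = 1 /\ complex.Re (w * z) = complex.Re `|z|.
Proof.
have [->|nz] := eqVneq z 0.
  by exists 1; rewrite normr1 mulr0 normr0.
exists (z^* / `|z|)%R; split.
  rewrite normrM normfV norm_conjC normr_id divff //.
  by rewrite normr_eq0.
rewrite mulrAC -normCKC expr2 mulfK //; by rewrite normr_eq0.
Qed.

Lemma rot z : exists w : K, nK w = 1 /\ toR (w * z) = nK z.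
Proof.
rewrite /nK; move: z; case: s => z; [exact: rotR | exact: rotC].
Qed.
End ToR.
Section NormX.
Variables (R : realType) (s : field_kind) (X : normedModType (scal R s)).
Local Notation K := (scal R s).

Definition NX (x : X) : R := toR `|x|.

Lemma NX_ge0 x : 0 <= NX x.
Proof. by rewrite /NX -(toR0 R s); apply: toR_le. Qed.

Lemma NXD x y : NX (x + y) <= NX x + NX y.
Proof. by rewrite /NX -toRD; apply: toR_le; apply: ler_normD. Qed.

Lemma NXZ (a : K) x : NX (a *: x) = nK a * NX x.
Proof. by rewrite /NX /nK normrZ toRM_ge0. Qed.

Lemma NXN x : NX (- x) = NX x.
Proof. by rewrite /NX normrN. Qed.

Lemma NX0 : NX 0 = 0.
Proof. by rewrite /NX normr0 toR0. Qed.

Lemma NX_eq0 x : NX x = 0 -> x = 0.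
Proof. by move=> /toR_ge0_eq0 -/(_ (normr_ge0 _)) /normr0_eq0. Qed.

Definition lin (h : X -> K) := forall (a : K) x y, h (a *: x + y) = a * h x + h y.

Lemma lin0 h : lin h -> h 0 = 0.
Proof.
move=> hl; have := hl 1 0 0; rewrite scaler0 addr0 mul1r.
by rewrite -{1}[h 0]addr0 => /addrI <-.
Qed.

Lemma linD h : lin h -> forall x y, h (x + y) = h x + h y.
Proof. by move=> hl x y; rewrite -[x]scale1r hl mul1r scale1r. Qed.

Lemma linZ h : lin h -> forall a x, h (a *: x) = a * h x.
Proof. by move=> hl a x; rewrite -[a *: x]addr0 hl lin0 // addr0. Qed.

Lemma linN h : lin h -> forall x, h (- x) = - h x.
Proof. by move=> hl x; rewrite -scaleN1r linZ // mulN1r. Qed.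

Lemma linB h : lin h -> forall x y, h (x - y) = h x - h y.
Proof. by move=> hl x y; rewrite linD // linN. Qed.

Definition subsp (V : set X) := V 0 /\ forall (a : K) x y, V x -> V y -> V (a *: x + y).

Lemma subspD V : subsp V -> forall x y, V x -> V y -> V (x + y).
Proof. by move=> [_ hV] x y vx vy; rewrite -[x]scale1r; apply: hV. Qed.

Lemma subspZ V : subsp V -> forall a x, V x -> V (a *: x).
Proof. by move=> [h0 hV] a x vx; rewrite -[a *: x]addr0; apply: hV. Qed.

Lemma subspB V : subsp V -> forall x y, V x -> V y -> V (x - y).
Proof.
by move=> hV x y vx vy; apply: subspD => //; rewrite -scaleN1r; apply: subspZ.
Qed.
End NormX.
Lemma real_step (R : realType) (T : Type) (U : T -> Prop) (phi p : T -> R)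
  (F : T -> R -> T) :
 (forall u v, U u -> U v -> phi u + phi v <= p (F u (-1)) + p (F v 1)) ->
 (forall u, U u -> phi u <= p (F u 0)) ->
 (forall t u, 0 < t -> U u -> exists2 u', U u' &
     phi u = t * phi u' /\ p (F u t) = t * p (F u' 1)) ->
 (forall t u, t < 0 -> U u -> exists2 u', U u' &
     phi u = - t * phi u' /\ p (F u t) = - t * p (F u' (-1))) ->
 exists a, forall u t, U u -> phi u + t * a <= p (F u t).
Proof.
move=> H1 H0 Hp Hn.
have [[u0 Uu0]|nU] := pselect (exists u, U u); last first.
  by exists 0 => u t Uu; exfalso; apply: nU; exists u.
pose A := [set phi u - p (F u (-1)) | u in U].
have ubA : forall v, U v -> ubound A (p (F v 1) - phi v).
  move=> v Uv _ [u Uu <-]; have := H1 u v Uu Uv; lra.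
have A0 : A !=set0 by exists (phi u0 - p (F u0 (-1))); exists u0.
have le1 : forall u, U u -> phi u - p (F u (-1)) <= sup A.
  move=> u Uu; apply: ub_le_sup; first by exists (p (F u0 1) - phi u0); apply: ubA.
  by exists u.
have le2 : forall v, U v -> sup A <= p (F v 1) - phi v.
  by move=> v Uv; apply: ge_sup => //; apply: ubA.
exists (sup A) => u t Uu.
have [tp|tn|->] := ltgtP t 0.
- have [u' Uu' [-> ->]] := Hn t u tp Uu.
  have := le1 u' Uu'; nra.
- have [u' Uu' [-> ->]] := Hp t u tn Uu.
  have := le2 u' Uu'; nra.
- by rewrite mul0r addr0; apply: H0.
Qed.
Section Emb.
Variables (R : realType) (s : field_kind).
Local Notation K := (scal R s).

Definition emb : R -> K :=
  match s return R -> scal R s with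
  | RealF => fun r => r
  | ComplexF => fun r => (r%:C)%C
  end.
Definition iK : K :=
  match s return scal R s with
  | RealF => 0
  | ComplexF => 'i%C
  end.
Definition imK : K -> R :=
  match s return scal R s -> R with
  | RealF => fun _ => 0
  | ComplexF => fun z => complex.Im z
  end.

Lemma embD a b : emb (a + b) = emb a + emb b.
Proof. by rewrite /emb; case: s => //; rewrite rmorphD. Qed.
Lemma embM a b : emb (a * b) = emb a * emb b.
Proof. by rewrite /emb; case: s => //; rewrite rmorphM. Qed.
Lemma embN a : emb (- a) = - emb a.
Proof. by rewrite /emb; case: s => //; rewrite rmorphN. Qed.
Lemma emb1 : emb 1 = 1.
Proof. by rewrite /emb; case: s. Qed.
Lemma emb0 : emb 0 = 0.
Proof. by rewrite /emb; case: s. Qed.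
Lemma embV a : emb (a^-1) = (emb a)^-1.
Proof. by rewrite /emb; case: s => //; rewrite fmorphV. Qed.

Lemma toR_embM r z : toR (emb r * z) = r * toR z.
Proof.
rewrite /emb; move: z; case: s => //= z; case: z => a b /=.
by rewrite mul0r subr0.
Qed.

Lemma toR_emb r : toR (emb r) = r.
Proof. by rewrite -[emb r]mulr1 toR_embM toR1 mulr1. Qed.

Lemma nK_emb r : nK (emb r) = `|r|.
Proof.
rewrite /nK /emb; case: s => //=.
by rewrite expr0n /= addr0 sqrtr_sqr.
Qed.

Lemma imKD a b : imK (a + b) = imK a + imK b.
Proof. rewrite /imK; move: a b; case: s => a b /=; [by rewrite addr0 | by case: a b => [? ?] [? ?]]. Qed.

Lemma imKN a : imK (- a) = - imK a.
Proof. rewrite /imK; move: a; case: s => a /=; [by rewrite oppr0 | by case: a => [? ?]]. Qed.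

Lemma imK_embM r z : imK (emb r * z) = r * imK z.
Proof.
rewrite /emb /imK; move: z; case: s => //= z; first by rewrite mulr0.
by case: z => a b /=; rewrite mul0r addr0.
Qed.

Lemma toR_iKM z : toR (iK * z) = - imK z.
Proof.
rewrite /iK /imK; move: z; case: s => //= z; first by rewrite mul0r oppr0.
by case: z => a b /=; rewrite !mul0r mul1r sub0r.
Qed.

Lemma imK_fix z : imK (z - emb (imK z) * iK) = 0.
Proof.
rewrite /iK /imK /emb; move: z; case: s => //= z.
by case: z => a b /=; rewrite !mul0r mulr1 addr0 subrr.
Qed.

Lemma imK0_emb z : imK z = 0 -> emb (toR z) = z.
Proof.
rewrite /imK /emb; move: z; case: s => //= z.
by case: z => a b /= ->.
Qed.
End Emb.
Lemma toR_iK (R : realType) (s : field_kind) : toR (iK R s) = 0.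
Proof. by case: s. Qed.
Section Step.
Variables (R : realType) (s : field_kind) (X : normedModType (scal R s)).
Local Notation K := (scal R s).
Local Notation emb := (@emb R s).

Lemma step_gen (U : set X) (phi : X -> R) (M : R) (w : X) :
  0 <= M ->
  (forall x y, U x -> U y -> U (x + y)) ->
  (forall r x, U x -> U (emb r *: x)) ->
  (forall x y, phi (x + y) = phi x + phi y) ->
  (forall r x, phi (emb r *: x) = r * phi x) ->
  (forall u, U u -> phi u <= M * NX u) ->
  exists a, forall u t, U u -> phi u + t * a <= M * NX (u + emb t *: w).
Proof.
move=> M0 UD UZ phiD phiZ phiM.
apply: (real_step (U := U) (phi := phi) (p := fun y => M * NX y)
   (F := fun u t => u + emb t *: w)).
- move=> u v Uu Uv; rewrite -phiD; apply: (le_trans (phiM _ (UD _ _ Uu Uv))).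
  rewrite -mulrDr; apply: ler_wpM2l => //.
  rewrite embN emb1 scaleN1r scale1r.
  have -> : u + v = (u - w) + (v + w) by rewrite addrACA addNr addr0.
  exact: NXD.
- by move=> u Uu; rewrite emb0 scale0r addr0; apply: phiM.
- move=> t u t0 Uu; exists (emb t^-1 *: u); first exact: UZ.
  split; first by rewrite phiZ mulrA mulfV ?mulr1 ?gt_eqF // mul1r.
  rewrite emb1 scale1r.
  have -> : u + emb t *: w = emb t *: (emb t^-1 *: u + w).
    by rewrite scalerDr scalerA -embM mulfV ?gt_eqF // emb1 scale1r.
  by rewrite NXZ nK_emb gtr0_norm // mulrCA.
- move=> t u t0 Uu; exists (emb (- t)^-1 *: u); first exact: UZ.
  have nt : - t != 0 by rewrite oppr_eq0 lt_eqF.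
  split; first by rewrite phiZ mulrA mulfV // mul1r.
  rewrite embN emb1 scaleN1r.
  have -> : u + emb t *: w = emb (- t) *: (emb (- t)^-1 *: u - w).
    by rewrite scalerBr scalerA -embM mulfV // emb1 scale1r embN scaleNr opprK.
  by rewrite NXZ nK_emb gtr0_norm ?oppr_gt0 // mulrCA.
Qed.
End Step.
Section OneStep.
Variables (R : realType) (s : field_kind) (X : normedModType (scal R s)).
Local Notation K := (scal R s).
Local Notation emb := (@emb R s).
Local Notation iK := (@iK R s).
Local Notation imK := (@imK R s).

Lemma one_step (V : set X) (k b : X -> K) (M : R) :
  0 <= M -> lin k -> lin b -> subsp V ->
  (forall x, V x -> b x = 0 -> nK (k x) <= M * NX x) ->
  exists c : K, forall x, V x -> nK (k x - c * b x) <= M * NX x.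
Proof.
move=> M0 lk lb sV H.
have [[x1 Vx1 bx1]|nb] := pselect (exists2 x1, V x1 & b x1 != 0); last first.
  exists 0 => x Vx; rewrite mul0r subr0; apply: H => //.
  by apply: contra_notP nb => /eqP bx; exists x.
have [x0 Vx0 bx0] : exists2 x0, V x0 & b x0 = 1.
  by exists ((b x1)^-1 *: x1); [apply: subspZ | rewrite (linZ lb) mulVf].
pose U := fun u => V u /\ b u = 0.
have [a1 Ha1] : exists a, forall u t, U u ->
    toR (k u) + t * a <= M * NX (u + emb t *: x0).
  apply: step_gen => //.
  - by move=> x y [Vx bx] [Vy By]; split; [apply: subspD | rewrite (linD lb) bx By addr0].
  - by move=> r x [Vx bx]; split; [apply: subspZ | rewrite (linZ lb) bx mulr0].
  - by move=> x y; rewrite (linD lk) toRD.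
  - by move=> r x; rewrite (linZ lk) toR_embM.
  - by move=> u [Vu bu]; apply: le_trans (toR_le_nK _) (H _ Vu bu).
pose P := fun x => x - b x *: x0.
have PD : forall x y, P (x + y) = P x + P y.
  by move=> x y; rewrite /P (linD lb) scalerDl opprD addrACA.
have PZ : forall r x, P (emb r *: x) = emb r *: P x.
  by move=> r x; rewrite /P (linZ lb) scalerBr scalerA.
have UP : forall x, V x -> U (P x).
  move=> x Vx; split; first by apply: subspB => //; apply: subspZ.
  by rewrite /P (linB lb) (linZ lb) bx0 mulr1 subrr.
have kP : forall x, k (P x) = k x - b x * k x0.
  by move=> x; rewrite /P (linB lk) (linZ lk).
pose phi1 := fun y => toR (k (P y)) + toR (b y) * a1.
pose U1 := fun y => V y /\ imK (b y) = 0.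
have [a2 Ha2] : exists a, forall y t, U1 y ->
    phi1 y + t * a <= M * NX (y + emb t *: (iK *: x0)).
  apply: step_gen => //.
  - move=> x y [Vx bx] [Vy By]; split; first by apply: subspD.
    by rewrite (linD lb) imKD bx By addr0.
  - move=> r x [Vx bx]; split; first by apply: subspZ.
    by rewrite (linZ lb) imK_embM bx mulr0.
  - by move=> x y; rewrite /phi1 PD (linD lk) (linD lb) !toRD mulrDl addrACA.
  - by move=> r x; rewrite /phi1 PZ (linZ lk) (linZ lb) !toR_embM mulrDr mulrA.
  - move=> y [Vy iy]; rewrite /phi1.
    have := Ha1 (P y) (toR (b y)) (UP _ Vy).
    by rewrite imK0_emb // /P subrK.
pose a := emb a1 - iK * emb a2.
pose c := k x0 - a.
have HA : forall x, V x -> toR (k x - c * b x) <= M * NX x.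
  move=> x Vx.
  pose y := x - (emb (imK (b x)) * iK) *: x0.
  have by_ : b y = b x - emb (imK (b x)) * iK.
    by rewrite /y (linB lb) (linZ lb) bx0 mulr1.
  have U1y : U1 y.
    split; first by apply: subspB => //; apply: subspZ.
    by rewrite by_ imK_fix.
  have := Ha2 y (imK (b x)) U1y.
  have -> : y + emb (imK (b x)) *: (iK *: x0) = x by rewrite scalerA subrK.
  move=> h2; apply: (le_trans _ h2); rewrite le_eqVlt; apply/orP; left; apply/eqP.
  have E : k x - c * b x = k (P x) + b x * a.
    by rewrite kP /c; generalize (k x) (k x0) (b x) a => p q r t; ring.
  rewrite E /phi1.
  have -> : P y = P x.
    by rewrite /P by_ scalerBl opprB /y addrA subrK.
  rewrite by_ /a toRD -addrA; congr (_ + _).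
  have e1 : b x * (emb a1 - iK * emb a2) = emb a1 * b x - emb a2 * (iK * b x).
    by generalize (b x) (emb a1) (emb a2) iK => p q r t; ring.
  rewrite e1 !toRD !toRN !toR_embM toR_iKM toR_iK mulr0 subr0.
  by generalize (toR (b x)) (imK (b x)) => p q; ring.
exists c => x Vx.
have [w [w1 hw]] := rot (k x - c * b x).
rewrite -hw.
have -> : w * (k x - c * b x) = k (w *: x) - c * b (w *: x).
  by rewrite (linZ lk) (linZ lb); generalize (k x) (b x) c w => p q r t; ring.
apply: le_trans (HA _ (subspZ sV _ Vx)) _.
by rewrite NXZ w1 mul1r.
Qed.
End OneStep.
Section Main.
Variables (R : realType) (s : field_kind) (X : normedModType (scal R s)).
Local Notation K := (scal R s).

Lemma lin_sum n (c : 'I_n -> K) (b : 'I_n -> X -> K) :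
  (forall i, lin (b i)) -> lin (fun x => \sum_(i < n) c i * b i x).
Proof.
move=> lb a x y; rewrite mulr_sumr -big_split /=; apply: eq_bigr => i _.
by rewrite (lb i) mulrDr mulrCA.
Qed.

Lemma lin_sub (h g : X -> K) : lin h -> lin g -> lin (fun x => h x - g x).
Proof.
move=> lh lg a x y; rewrite lh lg.
by generalize (h x) (h y) (g x) (g y) => p q r t; ring.
Qed.

Lemma main_ext n (b : 'I_n -> X -> K) (h : X -> K) (M : R) (V : set X) :
  0 <= M -> (forall i, lin (b i)) -> lin h -> subsp V ->
  (forall x, V x -> (forall i, b i x = 0) -> nK (h x) <= M * NX x) ->
  exists c : 'I_n -> K, forall x, V x ->
    nK (h x - \sum_(i < n) c i * b i x) <= M * NX x.
Proof.
move=> M0; elim: n b h V => [|n IH] b h V lb lh sV H.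
  exists (fun _ => 0) => x Vx; rewrite big_ord0 subr0; apply: H => //.
  by case.
pose V' := fun x => V x /\ b ord0 x = 0.
have sV' : subsp V'.
  split; first by rewrite /V'; split; [case: sV | rewrite lin0].
  move=> a x y [Vx bx] [Vy By]; split; first by case: sV => _; apply.
  by rewrite lb bx By mulr0 addr0.
have HV' : forall x, V' x -> (forall i, b (lift ord0 i) x = 0) ->
    nK (h x) <= M * NX x.
  move=> x [Vx bx] hb; apply: H => // i.
  by case: (unliftP ord0 i) => [j ->|->].
have [c' Hc'] := IH (fun i => b (lift ord0 i)) h V' (fun i => lb _) lh sV' HV'.
pose k := fun x => h x - \sum_(i < n) c' i * b (lift ord0 i) x.
have lk : lin k by apply: lin_sub => //; apply: lin_sum => i.
have [c0 Hc0] := one_step M0 lk (lb ord0) sV (fun x Vx bx => Hc' x (conj Vx bx)).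
exists (fun i => if unlift ord0 i is Some j then c' j else c0) => x Vx.
rewrite big_ord_recl unlift_none.
under eq_bigr => j _ do rewrite liftK.
have := Hc0 x Vx; rewrite /k.
by rewrite opprD addrA addrAC.
Qed.
End Main.
Theorem theorem4p8 (R : realType) (s : field_kind)
  (X : completeNormedModType (scal R s))
  (f : X -> scal R s) (Y : set (X -> scal R s)) (g0 : X -> scal R s) :
  dual f -> dual_subspace Y -> ~ Y f -> Y g0 ->
  (best_approx f g0 Y <->
   (forall Z : set (X -> scal R s),
      fin_dim_subspace Z -> Z `<=` Y -> Z g0 ->
      restr_norm (fun x => f x - g0 x) (\bigcap_(g in Z) nullspace g)
      = dual_norm (fun x => f x - g0 x))).
Proof.
move=> [lf _] [Yd [Y0 Ycl]] _ Yg0.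
have lY : forall g, Y g -> lin g by move=> g /Yd [].
have lh : lin (fun x => f x - g0 x) by apply: lin_sub => //; apply: lY.
set h := (fun x => f x - g0 x) in lh *.
split.
- move=> best Z [n [b ->]] Zsub Zg0.
  have lb : forall i, lin (b i).
    move=> i; apply: lY; apply: Zsub.
    have -> : b i = (fun x => \sum_(j < n) (j == i)%:R * b j x).
      apply: funext => x; rewrite (bigD1 i) //= eqxx mul1r big1 ?addr0 //.
      by move=> j /negbTE ->; rewrite mul0r.
    by exists (fun j => (j == i)%:R).
  set W := \bigcap_(g in _) nullspace g.
  have WP : forall x, (forall i, b i x = 0) -> W x.
    move=> x hx g [c _ <-]; rewrite /nullspace /=.
    by rewrite big1 // => i _; rewrite hx mulr0.
  apply/eqP; rewrite eq_le; apply/andP; split.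
    by apply: ereal_sup_le => _ [x [Wx nx] <-]; exists x.
  have S0 : (0 <= restr_norm h W)%E.
    apply: ereal_sup_ubound; exists 0.
      split; first by apply: WP => i; rewrite lin0.
      by rewrite normr0 toR0.
    by rewrite (lin0 lh) normr0 toR0.
  case HS: (restr_norm _ W) S0 => [M| |] //= M0; last by rewrite leey.
  rewrite lee_fin in M0.
  have HM : forall x, (forall i, b i x = 0) ->
      nK (h x) <= M * NX x.
    move=> x hx.
    have [->|nx] := eqVneq x 0; first by rewrite (lin0 lh) /nK normr0 toR0 NX0 mulr0.
    have nxp : 0 < NX x by rewrite lt_neqAle NX_ge0 andbT eq_sym; apply/eqP => /NX_eq0; apply/eqP.
    pose y := emb s (NX x)^-1 *: x.
    have : ((nK (h y))%:E <= M%:E)%E.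
      rewrite -HS; apply: ereal_sup_ubound; exists y => //; split.
        by apply: WP => i; rewrite (linZ (lb i)) hx mulr0.
      by rewrite -/(NX y) NXZ nK_emb ger0_norm ?invr_ge0 ?NX_ge0 // mulVf // gt_eqF.
    rewrite lee_fin /y (linZ lh) nKM nK_emb ger0_norm ?invr_ge0 ?NX_ge0 //.
    by rewrite mulrC ler_pdivrMr.
  have [c Hc] := main_ext M0 lb lh (V := setT) (conj I (fun _ _ _ _ _ => I))
     (fun x _ hx => HM x hx).
  pose g := fun x => 1 * (\sum_(i < n) c i * b i x) + g0 x.
  have Yg : Y g.
    by apply: Ycl => //; apply: Zsub; exists c.
  rewrite best.
  have Hg : (ereal_inf [set dual_norm (fun x : X => (f x - g1 x)%R) | g1 in Y]
     <= dual_norm (fun x => (f x - g x)%R))%E by apply: ereal_inf_lbound; exists g.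
  suff Hd : (dual_norm (fun x => (f x - g x)%R) <= M%:E)%E by exact: le_trans Hg Hd.
  apply: ge_ereal_sup => _ [x [_ nx] <-].
  rewrite lee_fin.
  have -> : f x - g x = h x - \sum_(i < n) c i * b i x.
    by rewrite /g /h mul1r opprD addrA addrAC.
  apply: le_trans (Hc x I) _.
  by rewrite -[X in _ <= X]mulr1 ler_wpM2l.
- move=> H.
  apply/eqP; rewrite eq_le; apply/andP; split; last first.
    by apply: ereal_inf_lbound; exists g0.
  apply: le_ereal_inf_tmp => _ [g Yg <-].
  pose bb := fun i : 'I_2 => if val i == 0%N then g0 else g.
  pose Z := [set (fun x => \sum_(i < 2) c i * bb i x) | c in [set: 'I_2 -> scal R s]].
  have ZE : forall c, (fun x => \sum_(i < 2) c i * bb i x) =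
                      (fun x => c ord0 * g0 x + (c (lift ord0 ord0) * g x + 0)).
    by move=> c; apply: funext => x; rewrite big_ord_recl big_ord_recl big_ord0.
  have Zg0 : Z g0.
    exists (fun i : 'I_2 => if val i == 0%N then 1 else 0) => //.
    by rewrite ZE; apply: funext => x /=; rewrite mul1r mul0r !addr0.
  have Zg : Z g.
    exists (fun i : 'I_2 => if val i == 0%N then 0 else 1) => //.
    by rewrite ZE; apply: funext => x /=; rewrite mul1r mul0r !addr0 add0r.
  have ZY : Z `<=` Y.
    by move=> _ [c _ <-]; rewrite ZE; apply: (Ycl) => //; apply: (Ycl).
  rewrite -(H Z) //; last by exists 2%N, bb.
  apply: ereal_sup_le => _ [x [Wx nx] <-]; exists x => //.
  have e0 : g0 x = 0 := Wx _ Zg0.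
  have e1 : g x = 0 := Wx _ Zg.
  by rewrite /h e0 e1.
Qed.
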